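(* Let $f:X\to Y$ be continuous and let $\Phi:Y\times[0,1]\to Z$ be a proper homotopy (a homotopy that is proper as a map). Then $L(\Phi\circ(f\times\mathrm{id}_{[0,1]}))=\Phi(L(f)\times[0,1])$.
   Context: All topological spaces are Hausdorff, second countable and locally compact. A continuous map is proper if preimages of compact sets are compact. The limit set $L(f)$ of a continuous map $f:X\to Y$ is the set of all $y\in Y$ for which there is a sequence $(x_n)$ in $X$ with no limit points in $X$ such that $f(x_n)\to y$. *)

(* Defs.v *)
From HB Require Import structures.
From mathcomp Require Import all_boot all_order all_algebra.
From mathcomp Require Import all_classical all_reals all_analysis.
From mathcomp Require Import subtype_topology.
Set Implicit Arguments. Unset Strict Implicit. Unset Printing Implicit Defensive.
Import Order.TTheory GRing.Theory Num.Theory.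
Import numFieldTopology.Exports.
Local Open Scope classical_set_scope.
Local Open Scope ring_scope.

Definition nice_space (T : topologicalType) : Prop :=
  [/\ hausdorff_space T, @second_countable T & locally_compact [set: T]].

Definition proper_map (S T : topologicalType) (f : S -> T) : Prop :=
  continuous f /\ forall K : set T, compact K -> compact (f @^-1` K).

Definition limit_set (S T : topologicalType) (f : S -> T) : set T :=
  [set y | exists u : nat -> S,
      cluster (u @ \oo) = set0 /\ (f \o u) @ \oo --> y].

Notation unit_interval R := (set_type (`[0, 1]%classic : set R)).

(* Main.v *)
Require Import Defs.
From HB Require Import structures.
From mathcomp Require Import all_boot all_order all_algebra.
From mathcomp Require Import all_classical all_reals all_analysis.
From mathcomp Require Import subtype_topology.
Import numFieldTopology.Exports.
Local Open Scope classical_set_scope.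
Local Open Scope ring_scope.

Lemma clusterS_seq {T : topologicalType} {u : nat -> T} {phi : nat -> nat} :
  (forall j, j <= phi j)%N -> cluster ((u \o phi) @ \oo) `<=` cluster (u @ \oo).
Proof.
move=> hphi; apply: cvg_cluster.
move=> A [N _ HN]; exists N => // k /= Nk; apply: HN; exact: leq_trans Nk (hphi k).
Qed.

Lemma cluster_map {S T : topologicalType} {g : S -> T} {F : set_system S} {p} :
  continuous g -> cluster F p -> cluster (g @ F) (g p).
Proof.
move=> gc Fp A B FA Bp.
have := Fp _ _ FA (gc p _ Bp).
by move=> [q [Aq Bq]]; exists (g q).
Qed.

Lemma extract {T : topologicalType} {u : nat -> T} {p} :
  @second_countable T -> cluster (u @ \oo) p ->
  exists phi : nat -> nat, (forall j, j <= phi j)%N /\ (u \o phi) @ \oo --> p.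
Proof.
move=> [B /countable_injP [e einj] [Bop Bb]] cp.
have : forall j : nat, exists V : set T, nbhs p V /\
   (forall U, B U -> U p -> e U = j -> V = U).
  move=> j; have [[U [BU Up eU]]|nU] := pselect (exists U, [/\ B U, U p & e U = j]).
    exists U; split; first by apply: open_nbhs_nbhs; split => //; exact: Bop.
    move=> U' BU' U'p eU'; apply: einj; rewrite ?inE //; congruence.
  exists setT; split; first exact: filterT.
  by move=> U BU Up eU; exfalso; apply: nU; exists U.
move=> /choice [V hV].
pose D k := [set q | forall j, (j <= k)%N -> V j q].
have nD : forall k, nbhs p (D k).
  elim=> [|k ih].
    apply: filterS (proj1 (hV 0%N)) => q Vq j; rewrite leqn0 => /eqP ->; done.
  apply: filterS (filterI ih (proj1 (hV k.+1))) => q [Dq Vq] j.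
  rewrite leq_eqVlt => /orP [/eqP -> //|]; rewrite ltnS; exact: Dq.
have : forall k, exists n, (k <= n)%N /\ D k (u n).
  move=> k.
  have uk : (u @ \oo) (u @` [set n | (k <= n)%N]) by exists k => // n /= kn; exists n.
  have [q [[n /= kn <-] Dq]] := cp _ _ uk (nD k).
  by exists n.
move=> /choice [phi hphi]; exists phi; split; first by move=> j; case: (hphi j).
move=> A /Bb [U [BU Up] UA].
exists (e U) => // k /= ek; apply: UA.
have := (proj2 (hphi k)) (e U) ek.
by rewrite ((proj2 (hV (e U))) U BU Up erefl).
Qed.

Lemma fst_cont {A B : topologicalType} : continuous (@fst A B).
Proof. by move=> p; exact: cvg_fst. Qed.

Theorem corollary5 (R : realType) (X Y Z : topologicalType)
  (hX : nice_space X) (hY : nice_space Y) (hZ : nice_space Z)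
  (f : X -> Y) (f_cont : continuous f)
  (Phi : (Y * unit_interval R)%type -> Z) (Phi_proper : proper_map Phi) :
  limit_set (fun p : (X * unit_interval R)%type => Phi (f p.1, p.2)) =
  Phi @` (limit_set f `*` [set: unit_interval R]).
Proof.
case: hX => _ scX _; case: hY => _ scY _; case: hZ => hZh _ hZl.
case: Phi_proper => Pc Pk.
rewrite eqEsubset; split; last first.
  move=> z [[y t] [[u [cu hu]] _] <-].
  exists (fun n => (u n, t)); split.
    rewrite -subset0 => -[x s] cxs.
    have : cluster (u @ \oo) x := cluster_map (@fst_cont _ _) cxs.
    by rewrite cu.
  have h1 : (fun n => (f (u n), t)) @ \oo --> (y, t).
    by apply: (@cvg_pair _ _ _ _ (nbhs y) (nbhs t) _ _ _ (fun n => f (u n)) (fun=> t) hu (cvg_cst t)).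
  exact: (cvg_comp _ _ h1 (Pc (y, t))).
move=> z [u [cu hu]].
have [K Kz [cK _]] := hZl z I.
have nK : nbhs z K by move: Kz; rewrite withinET.
have evK := hu K nK.
pose v n := (f (u n).1, (u n).2).
pose C := Phi @^-1` K.
have cC : compact C := Pk K cK.
have evC : (v @ \oo) C := evK.
have [[y0 t0] [Cyt cyt]] := cC (v @ \oo) _ evC.
have cy0 : cluster ((f \o fst \o u) @ \oo) y0 := cluster_map (@fst_cont _ _) cyt.
have [phi [phige phicvg]] := extract scY cy0.
exists (y0, t0); last first.
  have c1 : cluster ((fun p : (X * unit_interval R)%type => Phi (f p.1, p.2)) \o u @ \oo) (Phi (y0, t0)) :=
    cluster_map Pc cyt.
  have := cvg_cluster hu c1.
  by move=> /hZh.
split => //.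
exists (fst \o u \o phi); split; last exact: phicvg.
rewrite -subset0 => x cx.
have [psi [psige psicvg]] := extract scX cx.
pose rho := phi \o psi.
have rhoge : forall j, (j <= rho j)%N.
  by move=> j; apply: leq_trans (psige j) (phige (psi j)).
have evC' : ((v \o rho) @ \oo) C.
  case: evC => N _ HN; exists N => // k /= Nk; apply: HN; exact: leq_trans Nk (rhoge k).
have [[y1 s] [_ cys]] := cC _ _ evC'.
suff : cluster (u @ \oo) (x, s) by rewrite cu.
apply: (clusterS_seq rhoge).
move=> A B HA [[B1 B2] [nB1 nB2] B12].
have ev1 : ((u \o rho) @ \oo) [set a | B1 a.1] := psicvg B1 nB1.
have HgA' : ((v \o rho) @ \oo) ((fun a : (X * unit_interval R)%type => (f a.1, a.2)) @` (A `&` [set a | B1 a.1])).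
  case: HA => N1 _ H1; case: ev1 => N2 _ H2.
  exists (maxn N1 N2) => // n /= Nn; exists (u (rho n)) => //; split.
    by apply: H1; apply: leq_trans Nn; exact: leq_maxl.
  by apply: H2; apply: leq_trans Nn; exact: leq_maxr.
have nB2' : nbhs (y1, s) [set q : (Y * unit_interval R)%type | B2 q.2].
  exists (setT, B2); first by split => /=; [exact: (@filterT _ (nbhs y1)) | exact: nB2].
  by move=> [q1 q2] [_ ?].
have [q [[a [Aa B1a] <-] B2a]] := cys _ _ HgA' nB2'.
exists a; split => //; apply: B12; split => //.
Qed.
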